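(* Let $\Lambda$ be a locally finite $k$-graph with no sources or sinks, and let $\alpha$ be an action of $\mathbb{Z}^l$ on $\Lambda$ by automorphisms. Then $\Lambda$ is $\alpha$-aperiodic if and only if $(\Lambda^\infty,\tau^{\sigma,\alpha})$ is topologically free.
   Context: A $k$-graph is a countable category $\Lambda$ with a functor $d:\Lambda\to\mathbb{N}^k$ with unique factorisation; vertices are degree-$0$ morphisms. Locally finite with no sources or sinks: for each $p$ and vertex $v$, $v\Lambda^p$ and $\Lambda^pv$ are finite and nonempty. An automorphism is a bijective degree-preserving functor. $\Lambda^\infty$ is the set of degree-preserving functors $x:\Omega_k\to\Lambda$ ($\Omega_k=\{(a,b)\in\mathbb{N}^k\times\mathbb{N}^k:a\le b\}$ with $r(a,b)=(a,a)$, $s(a,b)=(b,b)$, $(a,b)(b,c)=(a,c)$, $d(a,b)=b-a$), with topology generated by the cylinder sets $\lambda\Lambda^\infty=\{x:x(0,d(\lambda))=\lambda\}$; $v\Lambda^\infty=\{x:x(0,0)=v\}$; $\sigma^p(x)(0,n)=x(p,p+n)$; $\phi^\infty(x)(0,n)=\phi(x(0,n))$ for an automorphism $\phi$. $\tau^{\sigma,\alpha}_{(p,m)}=\sigma^p\circ\alpha^\infty_{-m}$ for $(p,m)\in\mathbb{N}^k\times\mathbb{N}^l$. $(\Lambda^\infty,\tau^{\sigma,\alpha})$ is topologically free if for all distinct $s,t\in\mathbb{N}^k\times\mathbb{N}^l$ the set $\{x:\tau^{\sigma,\alpha}_s(x)=\tau^{\sigma,\alpha}_t(x)\}$ has empty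 interior. $\Lambda$ is $\alpha$-aperiodic if for each vertex $v$ and distinct $(p,m),(q,n)\in\mathbb{N}^k\times\mathbb{N}^l$ there is $x\in v\Lambda^\infty$ with $\sigma^p(\alpha^\infty_{-m}(x))\ne\sigma^q(\alpha^\infty_{-n}(x))$. *)

(* Defs.v *)
From mathcomp Require Import all_boot all_algebra.
Set Implicit Arguments. Unset Strict Implicit. Unset Printing Implicit Defensive.

(* N^k and Z^l as finite functions (extensional, decidable equality) *)
Notation Nk k := {ffun 'I_k -> nat}.
Notation Zl l := {ffun 'I_l -> int}.

Definition zeroN k : Nk k := [ffun _ => 0%N].
Definition addN k (m n : Nk k) : Nk k := [ffun i => (m i + n i)%N].
Definition subN k (m n : Nk k) : Nk k := [ffun i => (m i - n i)%N].
Definition leN k (m n : Nk k) : bool := [forall i, (m i <= n i)%N].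

Definition zeroZ l : Zl l := [ffun _ => 0%R].
Definition addZ l (z w : Zl l) : Zl l := [ffun i => (z i + w i)%R].
Definition negN l (m : Nk l) : Zl l := [ffun i => (- (m i)%:Z)%R].

(* Data of a small category with a degree functor to N^k.
   Morphisms go from ks to kr; kcomp f g is the composite "f g", meaningful
   when ks f = kr g (the convention of the paper / of Omega_k). *)
Record kgraph_data (k : nat) := KGraphData {
  Vert : Type;
  Mor : countType;
  kr : Mor -> Vert;
  ks : Mor -> Vert;
  kid : Vert -> Mor;
  kcomp : Mor -> Mor -> Mor;
  kd : Mor -> Nk k
}.

Arguments kr {k Λ} : rename.
Arguments ks {k Λ} : rename.
Arguments kid {k Λ} : rename.
Arguments kcomp {k Λ} : rename.
Arguments kd {k Λ} : rename.

Section KGraph.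
Variable k : nat.
Variable L : kgraph_data k.

Definition is_kgraph : Prop :=
  (forall v : Vert L, kr (kid v) = v /\ ks (kid v) = v) /\
  (forall f g : Mor L, ks f = kr g -> kr (kcomp f g) = kr f /\ ks (kcomp f g) = ks g) /\
  (forall f : Mor L, kcomp (kid (kr f)) f = f /\ kcomp f (kid (ks f)) = f) /\
  (forall f g h : Mor L, ks f = kr g -> ks g = kr h ->
      kcomp (kcomp f g) h = kcomp f (kcomp g h)) /\
  (forall v : Vert L, kd (kid v) = zeroN k) /\
  (forall f g : Mor L, ks f = kr g -> kd (kcomp f g) = addN (kd f) (kd g)) /\
  (forall (lam : Mor L) (m n : Nk k), kd lam = addN m n ->
      (exists mu nu : Mor L,
          ks mu = kr nu /\ lam = kcomp mu nu /\ kd mu = m /\ kd nu = n) /\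
      (forall mu nu mu' nu' : Mor L,
          ks mu = kr nu -> lam = kcomp mu nu -> kd mu = m -> kd nu = n ->
          ks mu' = kr nu' -> lam = kcomp mu' nu' -> kd mu' = m -> kd nu' = n ->
          mu = mu' /\ nu = nu')).

Definition locally_finite_no_sources_sinks : Prop :=
  forall (p : Nk k) (v : Vert L),
    (exists s : seq (Mor L), forall f, kr f = v -> kd f = p -> f \in s) /\
    (exists f : Mor L, kr f = v /\ kd f = p) /\
    (exists s : seq (Mor L), forall f, ks f = v -> kd f = p -> f \in s) /\
    (exists f : Mor L, ks f = v /\ kd f = p).

Definition is_automorphism (fV : Vert L -> Vert L) (fM : Mor L -> Mor L) : Prop :=
  bijective fV /\ bijective fM /\
  (forall f, kr (fM f) = fV (kr f) /\ ks (fM f) = fV (ks f)) /\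
  (forall v, fM (kid v) = kid (fV v)) /\
  (forall f g, ks f = kr g -> fM (kcomp f g) = kcomp (fM f) (fM g)) /\
  (forall f, kd (fM f) = kd f).

Definition is_action (l : nat) (aV : Zl l -> Vert L -> Vert L)
    (aM : Zl l -> Mor L -> Mor L) : Prop :=
  (forall z, is_automorphism (aV z) (aM z)) /\
  (forall v, aV (zeroZ l) v = v) /\ (forall f, aM (zeroZ l) f = f) /\
  (forall z w v, aV (addZ z w) v = aV z (aV w v)) /\
  (forall z w f, aM (addZ z w) f = aM z (aM w f)).

(* Infinite paths: degree-preserving functors Omega_k -> Lambda, recorded by
   their morphism map x a b = x(a,b) (only meaningful for a <= b). *)
Definition path_fun := Nk k -> Nk k -> Mor L.

Definition inf_path (x : path_fun) : Prop :=
  (forall a, x a a = kid (kr (x a a))) /\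
  (forall a b, leN a b -> kr (x a b) = kr (x a a) /\ ks (x a b) = kr (x b b)) /\
  (forall a b c, leN a b -> leN b c -> kcomp (x a b) (x b c) = x a c) /\
  (forall a b, leN a b -> kd (x a b) = subN b a).

Definition path_eq (x y : path_fun) : Prop :=
  forall a b, leN a b -> x a b = y a b.

Definition in_cyl (lam : Mor L) (x : path_fun) : Prop :=
  x (zeroN k) (kd lam) = lam.
Definition in_vcyl (v : Vert L) (x : path_fun) : Prop :=
  x (zeroN k) (zeroN k) = kid v.

Definition shift (p : Nk k) (x : path_fun) : path_fun :=
  fun a b => x (addN p a) (addN p b).
Definition autinf (fM : Mor L -> Mor L) (x : path_fun) : path_fun :=
  fun a b => fM (x a b).

Definition tau (l : nat) (aM : Zl l -> Mor L -> Mor L) (s : Nk k * Nk l)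
    (x : path_fun) : path_fun :=
  shift s.1 (autinf (aM (negN s.2)) x).

(* The topology on Lambda^oo is generated by the cylinder sets (a subbasis);
   basic open sets are finite intersections of cylinder sets. A set S has
   empty interior iff every nonempty basic open set meets the complement. *)
Definition in_basic (ls : seq (Mor L)) (x : path_fun) : Prop :=
  forall lam, lam \in ls -> in_cyl lam x.

Definition empty_interior (S : path_fun -> Prop) : Prop :=
  forall (ls : seq (Mor L)) (x : path_fun), inf_path x -> in_basic ls x ->
    exists y, inf_path y /\ in_basic ls y /\ ~ S y.

Definition topologically_free (l : nat) (aM : Zl l -> Mor L -> Mor L) : Prop :=
  forall s t : Nk k * Nk l, s <> t ->
    empty_interior (fun x => path_eq (tau aM s x) (tau aM t x)).

Definition alpha_aperiodic (l : nat) (aM : Zl l -> Mor L -> Mor L) : Prop :=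
  forall (v : Vert L) (s t : Nk k * Nk l), s <> t ->
    exists x, inf_path x /\ in_vcyl v x /\ ~ path_eq (tau aM s x) (tau aM t x).

End KGraph.

(* Main.v *)
Require Import Defs.
From mathcomp Require Import all_boot all_algebra zify.
From Stdlib Require Import ClassicalEpsilon.
Set Implicit Arguments. Unset Strict Implicit. Unset Printing Implicit Defensive.

Ltac nk := apply/ffunP => ?; rewrite !ffunE; lia.

Lemma leNP k (a b : Nk k) : reflect (forall i, a i <= b i) (leN a b).
Proof. exact: forallP. Qed.

Lemma addNA k (a b c : Nk k) : addN a (addN b c) = addN (addN a b) c.
Proof. by apply/ffunP => i; rewrite !ffunE addnA. Qed.
Lemma addNC k (a b : Nk k) : addN a b = addN b a.
Proof. by apply/ffunP => i; rewrite !ffunE addnC. Qed.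
Lemma add0N k (a : Nk k) : addN (zeroN k) a = a.
Proof. by apply/ffunP => i; rewrite !ffunE. Qed.
Lemma addN0 k (a : Nk k) : addN a (zeroN k) = a.
Proof. by apply/ffunP => i; rewrite !ffunE addn0. Qed.
Lemma subNK k (a b : Nk k) : leN a b -> addN a (subN b a) = b.
Proof. move/leNP=> H; apply/ffunP => i; rewrite !ffunE; have := H i. move: (a i) (b i) => x y. lia. Qed.
Lemma addKN k (a c : Nk k) : subN (addN a c) a = c.
Proof. by apply/ffunP => i; rewrite !ffunE addKn. Qed.
Lemma subNn k (a : Nk k) : subN a a = zeroN k.
Proof. by apply/ffunP => i; rewrite !ffunE subnn. Qed.
Lemma subN0 k (a : Nk k) : subN a (zeroN k) = a.
Proof. by apply/ffunP => i; rewrite !ffunE subn0. Qed.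
Lemma addN_sub k (a b c : Nk k) : addN a c = b -> c = subN b a.
Proof. by move<-; rewrite addKN. Qed.
Lemma leNn k (a : Nk k) : leN a a.
Proof. by apply/leNP. Qed.
Lemma le0N k (a : Nk k) : leN (zeroN k) a.
Proof. by apply/leNP => i; rewrite ffunE. Qed.
Lemma leN_trans k (a b c : Nk k) : leN a b -> leN b c -> leN a c.
Proof. move/leNP=> H1 /leNP H2; apply/leNP => i; exact: leq_trans (H1 i) (H2 i). Qed.
Lemma leN_addr k (a b : Nk k) : leN a (addN a b).
Proof. by apply/leNP => i; rewrite ffunE leq_addr. Qed.
Lemma leN_addl k (a b : Nk k) : leN a (addN b a).
Proof. by apply/leNP => i; rewrite ffunE leq_addl. Qed.
Lemma leN_add2l k (r a b : Nk k) : leN a b -> leN (addN r a) (addN r b).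
Proof. by move/leNP=> H; apply/leNP => i; rewrite !ffunE leq_add2l. Qed.

Section G.
Variables (k : nat) (L : kgraph_data k).
Hypothesis HL : is_kgraph L.

Lemma kid_rs (v : Vert L) : kr (kid v) = v /\ ks (kid v) = v.
Proof. by case: HL => H _; exact: H. Qed.
Lemma comp_rs (f g : Mor L) : ks f = kr g -> kr (kcomp f g) = kr f /\ ks (kcomp f g) = ks g.
Proof. by case: HL => _ [H _]; exact: H. Qed.
Lemma comp_id (f : Mor L) : kcomp (kid (kr f)) f = f /\ kcomp f (kid (ks f)) = f.
Proof. by case: HL => _ [_ [H _]]; exact: H. Qed.
Lemma compA (f g h : Mor L) : ks f = kr g -> ks g = kr h ->
      kcomp (kcomp f g) h = kcomp f (kcomp g h).
Proof. by case: HL => _ [_ [_ [H _]]]; exact: H. Qed.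
Lemma kd_id (v : Vert L) : kd (kid v : Mor L) = zeroN k.
Proof. by case: HL => _ [_ [_ [_ [H _]]]]; exact: H. Qed.
Lemma kd_comp (f g : Mor L) : ks f = kr g -> kd (kcomp f g) = addN (kd f) (kd g).
Proof. by case: HL => _ [_ [_ [_ [_ [H _]]]]]; exact: H. Qed.
Lemma ufp (lam : Mor L) (m n : Nk k) : kd lam = addN m n ->
      (exists mu nu : Mor L,
          ks mu = kr nu /\ lam = kcomp mu nu /\ kd mu = m /\ kd nu = n) /\
      (forall mu nu mu' nu' : Mor L,
          ks mu = kr nu -> lam = kcomp mu nu -> kd mu = m -> kd nu = n ->
          ks mu' = kr nu' -> lam = kcomp mu' nu' -> kd mu' = m -> kd nu' = n ->
          mu = mu' /\ nu = nu').
Proof. by case: HL => _ [_ [_ [_ [_ [_ H]]]]]; exact: H. Qed.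

Definition facP (lam : Mor L) m (p : Mor L * Mor L) :=
  ks p.1 = kr p.2 /\ lam = kcomp p.1 p.2 /\ kd p.1 = m /\ kd p.2 = subN (kd lam) m.
Definition fac (lam : Mor L) m := epsilon (inhabits (lam, lam)) (facP lam m).
Definition pre lam m := (fac lam m).1.
Definition suf lam m := (fac lam m).2.

Lemma fac_spec lam m : leN m (kd lam) -> facP lam m (fac lam m).
Proof.
move=> le; apply: epsilon_spec.
have [[mu [nu [H1 [H2 [H3 H4]]]]] _] := ufp (esym (subNK le)).
by exists (mu, nu).
Qed.

Lemma fac_eq lam m (mu nu : Mor L) : ks mu = kr nu -> lam = kcomp mu nu -> kd mu = m ->
  fac lam m = (mu, nu).
Proof.
move=> H1 H2 H3.
have Hd : kd lam = addN m (kd nu) by rewrite H2 kd_comp // H3.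
have le : leN m (kd lam) by rewrite Hd leN_addr.
have [G1 [G2 [G3 G4]]] := fac_spec le.
have Hn : kd nu = subN (kd lam) m by rewrite Hd addKN.
have Hd' : kd lam = addN m (subN (kd lam) m) by rewrite subNK.
have [_ U] := ufp Hd'.
have [E1 E2] := U _ _ _ _ G1 G2 G3 G4 H1 H2 H3 Hn.
by case: (fac lam m) E1 E2 => /= a b -> ->.
Qed.

Lemma kd0_id (f : Mor L) : kd f = zeroN k -> f = kid (kr f).
Proof.
move=> H.
have [K1 K2] := kid_rs (kr f). have [C1 C2] := comp_id f.
have [K3 K4] := kid_rs (ks f).
have E1 : fac f (zeroN k) = (kid (kr f), f) by apply: fac_eq; rewrite ?K2 ?C1 ?kd_id.
have E2 : fac f (zeroN k) = (f, kid (ks f)) by apply: fac_eq; rewrite ?K3 ?C2.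
by rewrite E1 in E2; case: E2.
Qed.

Lemma pre_full (mu : Mor L) : pre mu (kd mu) = mu /\ suf mu (kd mu) = kid (ks mu).
Proof.
have [K1 K2] := kid_rs (ks mu). have [C1 C2] := comp_id mu.
by rewrite /pre /suf (@fac_eq mu (kd mu) mu (kid (ks mu))) ?K1 ?C2.
Qed.

Lemma pre_zero (mu : Mor L) : pre mu (zeroN k) = kid (kr mu) /\ suf mu (zeroN k) = mu.
Proof.
have [K1 K2] := kid_rs (kr mu). have [C1 C2] := comp_id mu.
by rewrite /pre /suf (@fac_eq mu (zeroN k) (kid (kr mu)) mu) ?K2 ?C1 ?kd_id.
Qed.

Lemma pre_comp (mu nu : Mor L) m : ks mu = kr nu -> leN m (kd mu) ->
  pre (kcomp mu nu) m = pre mu m /\ suf (kcomp mu nu) m = kcomp (suf mu m) nu.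
Proof.
move=> Hmn le; have [G1 [G2 [G3 G4]]] := fac_spec le.
move: G1 G2 G3 G4; rewrite /pre /suf; case: (fac mu m) => p q /= G1 G2 G3 G4.
have Hq : ks q = kr nu by rewrite -Hmn G2; case: (comp_rs G1).
have [R1 R2] := comp_rs Hq.
rewrite (@fac_eq _ m p (kcomp q nu)) //; first by rewrite R1.
by rewrite G2 compA.
Qed.

Lemma fac_rs lam m : leN m (kd lam) ->
  kr (pre lam m) = kr lam /\ ks (suf lam m) = ks lam /\ ks (pre lam m) = kr (suf lam m).
Proof.
move=> le; have [G1 [G2 _]] := fac_spec le.
move: G1 G2; rewrite /pre /suf; case: (fac lam m) => p q /= G1 G2.
by rewrite G2; case: (comp_rs G1) => -> ->.
Qed.

Lemma fac_kd lam m : leN m (kd lam) -> kd (pre lam m) = m /\ kd (suf lam m) = subN (kd lam) m.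
Proof. by move=> le; have [_ [_ [G3 G4]]] := fac_spec le. Qed.

Lemma fac_comp lam m : leN m (kd lam) -> lam = kcomp (pre lam m) (suf lam m).
Proof. by move=> le; have [_ [G2 _]] := fac_spec le. Qed.

Lemma pre_pre lam m n : leN m n -> leN n (kd lam) -> pre lam m = pre (pre lam n) m.
Proof.
move=> le1 le2.
have [_ [_ H]] := fac_rs le2.
have [Hk _] := fac_kd le2.
rewrite {1}(fac_comp le2).
by case: (pre_comp H (m := m)); rewrite ?Hk.
Qed.


Definition pathF (F : Nk k -> Mor L) : path_fun L := fun a b => suf (F b) a.

Lemma pathF_ok (F : Nk k -> Mor L) :
  (forall N, kd (F N) = N) -> (forall N N', leN N N' -> pre (F N') N = F N) ->
  inf_path (pathF F) /\ forall N, pathF F (zeroN k) N = F N.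
Proof.
move=> F1 F2.
have key : forall a b, leN a b ->
   ks (F a) = kr (pathF F a b) /\ F b = kcomp (F a) (pathF F a b) /\ kd (pathF F a b) = subN b a.
  move=> a b le; have le' : leN a (kd (F b)) by rewrite F1.
  have [_ [_ R]] := fac_rs le'. have [_ K] := fac_kd le'.
  rewrite F1 in K; rewrite /pathF -(F2 _ _ le); split => //; split => //.
  exact: fac_comp.
have diag : forall a, pathF F a a = kid (ks (F a)).
  move=> a; rewrite /pathF; have := pre_full (F a); rewrite F1 => -[_ ->] //.
split; last first.
  by move=> N; rewrite /pathF; case: (pre_zero (F N)).
split.
  move=> a; apply: kd0_id; have [_ [_ ->]] := key a a (leNn a); exact: subNn.
split.
  move=> a b le; have [K1 [K2 K3]] := key a b le.
  rewrite !diag; have [R1 R2] := kid_rs (ks (F a)); have [R3 R4] := kid_rs (ks (F b)).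
  rewrite R1 R3 K1; split => //.
  by have [_ <-] := comp_rs K1; rewrite -K2.
split.
  move=> a b c lab lbc; have lac := leN_trans lab lbc.
  have [A1 [A2 A3]] := key a b lab; have [B1 [B2 B3]] := key b c lbc.
  have [C1 [C2 C3]] := key a c lac.
  have E1 : ks (pathF F a b) = kr (pathF F b c).
    by rewrite -B1 A2; case: (comp_rs A1).
  have E : F c = kcomp (F a) (kcomp (pathF F a b) (pathF F b c)).
    by rewrite B2 A2 compA.
  have [R1 _] := comp_rs E1.
  have f1 := fac_eq (m := a) C1 C2 (F1 a).
  have f2 : fac (F c) a = (F a, kcomp (pathF F a b) (pathF F b c)).
    by apply: fac_eq => //; rewrite R1.
  by rewrite f1 in f2; case: f2.
by move=> a b le; have [_ [_ ->]] := key a b le.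
Qed.

End G.

Section E.
Variables (k : nat) (L : kgraph_data k).
Hypothesis HL : is_kgraph L.

Definition ones (n : nat) : Nk k := [ffun _ => n].
Lemma leN_ones n n' : n <= n' -> leN (ones n) (ones n').
Proof. by move=> h; apply/leNP => i; rewrite !ffunE. Qed.
Definition mx (N : Nk k) := \max_i N i.
Lemma leN_mx N : leN N (ones (mx N)).
Proof. by apply/leNP => i; rewrite ffunE; exact: leq_bigmax. Qed.
Lemma mx_mono N N' : leN N N' -> mx N <= mx N'.
Proof.
move/leNP=> H; apply/bigmax_leqP => i _; apply: leq_trans (H i) _; exact: leq_bigmax.
Qed.

Section Ex.
Hypothesis NS : forall (u : Vert L) (p : Nk k), exists f : Mor L, kr f = u /\ kd f = p.

Definition ext (u : Vert L) : Mor L :=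
  epsilon (inhabits (kid u)) (fun f => kr f = u /\ kd f = ones 1).
Lemma ext_spec u : kr (ext u) = u /\ kd (ext u) = ones 1.
Proof. exact: (epsilon_spec _ _ (NS u (ones 1))). Qed.

Fixpoint lam (v : Vert L) n : Mor L :=
  if n is n'.+1 then kcomp (lam v n') (ext (ks (lam v n'))) else kid v.

Lemma lam_kd v n : kd (lam v n) = ones n /\ kr (lam v n) = v.
Proof.
elim: n => [|n [IH1 IH2]] /=.
  split; last by case: (kid_rs HL v).
  by rewrite kd_id //; apply/ffunP => i; rewrite !ffunE.
have [E1 E2] := ext_spec (ks (lam v n)).
rewrite kd_comp // E2 IH1; split; last by case: (comp_rs HL (esym E1)) => -> _.
by apply/ffunP => i; rewrite !ffunE addn1.
Qed.

Lemma lam_pre v n n' : n <= n' -> pre (lam v n') (ones n) = lam v n.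
Proof.
elim: n' => [|n' IH].
  by rewrite leqn0 => /eqP ->; have [<- _] := lam_kd v 0; case: (pre_full HL (lam v 0)).
rewrite leq_eqVlt => /orP [/eqP ->|lt].
  by have [<- _] := lam_kd v n'.+1; case: (pre_full HL (lam v n'.+1)).
have [E1 E2] := ext_spec (ks (lam v n')).
have h : leN (ones n) (kd (lam v n')) by have [-> _] := lam_kd v n'; apply: leN_ones.
by rewrite /=; have [-> _] := pre_comp HL (esym E1) h; exact: IH.
Qed.

Definition Fex v N := pre (lam v (mx N)) N.

Lemma exists_path (v : Vert L) : exists x, inf_path x /\ in_vcyl v x.
Proof.
have le : forall N, leN N (kd (lam v (mx N))).
  by move=> N; have [-> _] := lam_kd v (mx N); apply: leN_mx.
have F1 : forall N, kd (Fex v N) = N.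
  by move=> N; have [-> _] := fac_kd HL (le N).
have F2 : forall N N', leN N N' -> pre (Fex v N') N = Fex v N.
  move=> N N' le'; rewrite /Fex.
  rewrite -(pre_pre HL le' (le N')).
  have h1 : leN (ones (mx N)) (kd (lam v (mx N'))).
    by have [-> _] := lam_kd v (mx N'); apply: leN_ones; apply: mx_mono.
  by rewrite (pre_pre HL (leN_mx N) h1) lam_pre // mx_mono.
have [P1 P2] := pathF_ok HL F1 F2.
exists (pathF (Fex v)); split => //; rewrite /in_vcyl P2 /Fex.
by have [-> _] := pre_zero HL (lam v (mx (zeroN k))); have [_ ->] := lam_kd v (mx (zeroN k)).
Qed.
End Ex.
End E.

Section C.
Variables (k : nat) (L : kgraph_data k).
Hypothesis HL : is_kgraph L.
Variables (mu : Mor L) (y : path_fun L).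
Hypothesis Hy : inf_path y.
Hypothesis Hmy : ks mu = kr (y (zeroN k) (zeroN k)).

Lemma y_cmp a b c : leN a b -> leN b c -> ks (y a b) = kr (y b c).
Proof.
case: Hy => _ [H _] lab lbc; have [_ ->] := H a b lab; by have [-> _] := H b c lbc.
Qed.
Lemma y_comp a b c : leN a b -> leN b c -> kcomp (y a b) (y b c) = y a c.
Proof. by case: Hy => _ [_ [H _]]; exact: H. Qed.
Lemma y_kd a b : leN a b -> kd (y a b) = subN b a.
Proof. by case: Hy => _ [_ [_ H]]; exact: H. Qed.
Lemma mu_y N : ks mu = kr (y (zeroN k) N).
Proof. by case: Hy => _ [H _]; have [-> _] := H _ N (le0N N). Qed.

Definition G N := kcomp mu (y (zeroN k) N).
Lemma G_kd N : kd (G N) = addN (kd mu) N.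
Proof. by rewrite /G kd_comp ?y_kd ?subN0 //; [apply: le0N | apply: mu_y]. Qed.
Lemma G_ext N N' : leN N N' -> G N' = kcomp (G N) (y N N') /\ ks (G N) = kr (y N N').
Proof.
move=> le; rewrite /G -(y_comp (le0N N) le) compA //; last exact: y_cmp (le0N N) le.
  split => //; have [_ ->] := comp_rs HL (mu_y N); exact: y_cmp (le0N N) le.
exact: mu_y.
Qed.

Definition Fc N := pre (G N) N.
Lemma Fc1 N : kd (Fc N) = N.
Proof.
have h : leN N (kd (G N)) by rewrite G_kd leN_addl.
by have [-> _] := fac_kd HL h.
Qed.
Lemma Fc2 N N' : leN N N' -> pre (Fc N') N = Fc N.
Proof.
move=> le; rewrite /Fc -(pre_pre HL le); last by rewrite G_kd leN_addl.
have [-> E] := G_ext le.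
have h : leN N (kd (G N)) by rewrite G_kd leN_addl.
by have [-> _] := pre_comp HL E h.
Qed.

Definition zc := pathF Fc.
Lemma zc_path : inf_path zc.
Proof. by case: (pathF_ok HL Fc1 Fc2). Qed.
Lemma zc_pre D : leN D (kd mu) -> zc (zeroN k) D = pre mu D.
Proof.
move=> le; rewrite /zc; have [_ ->] := pathF_ok HL Fc1 Fc2.
by rewrite /Fc /G; have [-> _] := pre_comp HL (mu_y D) le.
Qed.
Lemma zc_shift a b : leN a b -> zc (addN (kd mu) a) (addN (kd mu) b) = y a b.
Proof.
move=> le; rewrite /zc /pathF.
have lb : leN b (addN (kd mu) b) by apply: leN_addl.
have [E1 E2] := G_ext lb.
have -> : Fc (addN (kd mu) b) = G b.
  have h : leN (addN (kd mu) b) (kd (G b)) by rewrite G_kd leNn.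
  rewrite /Fc E1; have [-> _] := pre_comp HL E2 h.
  by rewrite -G_kd; case: (pre_full HL (G b)).
have [E3 E4] := G_ext le.
by rewrite /suf (fac_eq HL E4 E3 (G_kd a)).
Qed.
End C.

Lemma foldr_le k (T : eqType) (f : T -> Nk k) (ls : seq T) lam :
  lam \in ls -> leN (f lam) (foldr (@addN k) (zeroN k) (map f ls)).
Proof.
elim: ls => [|l ls IH] //=; rewrite inE => /orP [/eqP ->|h]; first exact: leN_addr.
apply: leN_trans (IH h) _; exact: leN_addl.
Qed.

Theorem lemma5p6 (k l : nat) (L : kgraph_data k)
    (aV : Zl l -> Vert L -> Vert L) (aM : Zl l -> Mor L -> Mor L) :
  is_kgraph L ->
  locally_finite_no_sources_sinks L ->
  is_action aV aM ->
  (alpha_aperiodic aM <-> topologically_free aM).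
Proof.
move=> HL Hlf _; split.
- move=> Hap s t st ls x Hx Hb.
  pose r := foldr (@addN k) (zeroN k) (map kd ls).
  have Hr : forall lam, lam \in ls -> leN (kd lam) r by move=> lam; exact: foldr_le.
  pose mu := x (zeroN k) r.
  have [y [Hy [Hv Hne]]] := Hap (ks mu) s t st.
  have Hmy : ks mu = kr (y (zeroN k) (zeroN k)).
    move: Hv; rewrite /in_vcyl => E; have := congr1 kr E; case: (kid_rs HL (ks mu)) => K _; rewrite K => E2; exact: (esym E2).
  have [Hx1 [Hx2 [Hx3 Hx4]]] := Hx.
  have Hkd : kd mu = r by rewrite Hx4 ?subN0 ?le0N.
  exists (zc mu y); split; first exact: zc_path.
  split.
    move=> lam Hl; rewrite /in_cyl zc_pre //; last by rewrite Hkd Hr.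
    have le := Hr lam Hl.
    rewrite /mu -(Hx3 _ _ _ (le0N _) le).
    have c : ks (x (zeroN k) (kd lam)) = kr (x (kd lam) r).
      have [_ ->] := Hx2 _ _ (le0N (kd lam)); by have [-> _] := Hx2 _ _ le.
    have h : leN (kd lam) (kd (x (zeroN k) (kd lam))) by rewrite Hx4 ?subN0 ?leNn ?le0N.
    have [-> _] := pre_comp HL c h.
    have h2 : kd (x (zeroN k) (kd lam)) = kd lam by rewrite Hx4 ?subN0 ?le0N.
    rewrite -{2}h2; have [-> _] := pre_full HL (x (zeroN k) (kd lam)).
    exact: Hb.
  move=> P; apply: Hne => a b le.
  have := P (addN (kd mu) a) (addN (kd mu) b) (leN_add2l _ le).
  have Hs : forall p c, addN p (addN (kd mu) c) = addN (kd mu) (addN p c).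
    by move=> p c; rewrite !addNA (addNC p).
  rewrite /tau /shift /autinf !Hs !zc_shift //; exact: leN_add2l.
- move=> Htf v s t st.
  have NS : forall (u : Vert L) (p : Nk k), exists f : Mor L, kr f = u /\ kd f = p.
    by move=> u p; have [_ [H _]] := Hlf p u.
  have [x [Hx Hv]] := exists_path HL NS v.
  have Hb : in_basic [:: kid v] x.
    by move=> lam; rewrite inE => /eqP ->; rewrite /in_cyl kd_id.
  have [y [Hy [Hb' Hne]]] := Htf s t st _ x Hx Hb.
  exists y; split => //; split => //.
  by have := Hb' (kid v); rewrite inE eqxx /in_cyl kd_id // => H; apply: H.
Qed.
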